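(* Let $n\ge 3$ be an integer, let $\Delta_n=\{x=(x_1,\dots,x_n)\in\mathbb{R}^n : x_i\ge 0 \text{ for all } i,\ x_1+\cdots+x_n=1\}$ be the probability simplex, and let $u=(\tfrac1n,\dots,\tfrac1n)\in\Delta_n$. For every $p\in\Delta_n\setminus\{u\}$ there are unique points $a(p),b(p)\in\Delta_n$ such that $\{u,p\}\subseteq[a(p),b(p)]$ and $\|a(p)-b(p)\|$ is maximal among all segments in $\Delta_n$ containing $u$ and $p$ (here $a(p)$ is the endpoint on the side of $u$ opposite to $p$, and $b(p)$ the endpoint on the side of $p$). Then the maximum value of $$\max_{p\in\Delta_n\setminus\{u\}} \frac{\langle a(p),b(p)\rangle}{\|a(p)\|\,\|b(p)\|}$$ is $\dfrac{n-2}{n+2}$, and a pair realizing this maximum is $a^*=\tfrac1n(2,1,1,\dots,1,0)$, $b^*=\tfrac1n(0,1,1,\dots,1,2)$. Consequently, the minimal angle spread, i.e. the minimum over $p\in\Delta_n\setminus\{u\}$ of the angle $\arccos\big(\langle a(p),b(p)\rangle/(\|a(p)\|\|b(p)\|)\big)$, equals $\arccos\big(\tfrac{n-2}{n+2}\big)$.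
   Context: $\mathbb{R}^n$ carries the standard Euclidean inner product $\langle\cdot,\cdot\rangle$ and norm $\|\cdot\|$. For $a,b\in\mathbb{R}^n$, $[a,b]=\{(1-t)a+tb: t\in[0,1]\}$ denotes the closed line segment. The angle between nonzero vectors $a,b$ is $\measuredangle(a,b)=\arccos\big(\langle a,b\rangle/(\|a\|\|b\|)\big)$. *)

(* Defs.v *)
From mathcomp Require Import all_boot all_order all_algebra.
From mathcomp Require Import all_classical all_reals all_analysis.
Set Implicit Arguments. Unset Strict Implicit. Unset Printing Implicit Defensive.
Import Order.TTheory GRing.Theory Num.Theory.
Local Open Scope ring_scope.

Section Defs.
Variable R : realType.

Definition dot n (x y : 'rV[R]_n) : R := \sum_(i < n) x ord0 i * y ord0 i.
Definition enorm n (x : 'rV[R]_n) : R := Num.sqrt (dot x x).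

Definition cosang n (a b : 'rV[R]_n) : R := dot a b / (enorm a * enorm b).
Definition angle n (a b : 'rV[R]_n) : R := acos (cosang a b).

Definition in_seg n (a b x : 'rV[R]_n) : Prop :=
  exists t : R, 0 <= t <= 1 /\ x = (1 - t) *: a + t *: b.

Definition in_simplex n (x : 'rV[R]_n) : Prop :=
  (forall i, 0 <= x ord0 i) /\ \sum_(i < n) x ord0 i = 1.

Definition ubar n : 'rV[R]_n := \row_(i < n) n%:R^-1.

(* [a,b] is a segment in Delta_n containing u and p, of maximal length
   among all such segments, with a on the side of u opposite to p
   (u lies in [a,p]) and b on the side of p. *)
Definition max_seg n (p a b : 'rV[R]_n) : Prop :=
  in_simplex a /\ in_simplex b /\ in_seg a b (ubar n) /\ in_seg a b p /\
      in_seg a p (ubar n) /\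
      (forall a' b', in_simplex a' -> in_simplex b' ->
         in_seg a' b' (ubar n) -> in_seg a' b' p ->
         enorm (a' - b') <= enorm (a - b)).

Definition a_star n : 'rV[R]_n :=
  \row_(i < n) ((if (i : nat) == 0%N then 2 else if (i : nat) == n.-1 then 0 else 1) / n%:R).
Definition b_star n : 'rV[R]_n :=
  \row_(i < n) ((if (i : nat) == 0%N then 0 else if (i : nat) == n.-1 then 2 else 1) / n%:R).

End Defs.

(* Main.v *)
Require Import Defs.
From mathcomp Require Import all_boot all_order all_algebra.
From mathcomp Require Import all_classical all_reals all_analysis.
From mathcomp Require Import ring lra.
Import Order.TTheory GRing.Theory Num.Theory.
Local Open Scope ring_scope.
Set Implicit Arguments. Unset Strict Implicit. Unset Printing Implicit Defensive.

Definition dd (R : realType) n (p : 'rV[R]_n) := p - ubar R n.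

Lemma sum_quad (R : realType) n (f : 'I_n -> R) c1 c2 c3 c4 :
  \sum_i (c1 + c2 * f i) * (c3 + c4 * f i) =
  n%:R * (c1*c3) + (c1*c4 + c2*c3) * \sum_i f i + c2*c4 * \sum_i f i ^+ 2.
Proof.
rewrite (eq_bigr (fun i => c1*c3 + ((c1*c4+c2*c3) * f i + c2*c4 * f i ^+2))); last by move=> i _; ring.
by rewrite big_split big_split /= sumr_const card_ord -!mulr_sumr mulr_natl addrA.
Qed.

Lemma coord_line (R : realType) n (d : 'rV[R]_n) x i :
  (ubar R n + x *: d) ord0 i = n%:R^-1 + x * d ord0 i.
Proof. by rewrite !mxE. Qed.

Lemma dot_line (R : realType) n (d : 'rV[R]_n) x y : (0 < n)%N -> \sum_i d ord0 i = 0 ->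
  dot (ubar R n + x *: d) (ubar R n + y *: d) = n%:R^-1 + x * y * dot d d.
Proof.
move=> n0 s0; rewrite /dot.
under eq_bigr do rewrite !coord_line.
rewrite sum_quad s0.
have nz : (n%:R : R) != 0 by rewrite pnatr_eq0 -lt0n.
under [X in _ = _ + _ * X]eq_bigr do rewrite -expr2.
by field.
Qed.

Lemma sum_line (R : realType) n (d : 'rV[R]_n) x : (0 < n)%N -> \sum_i d ord0 i = 0 ->
  \sum_i (ubar R n + x *: d) ord0 i = 1.
Proof.
move=> n0 s0; under eq_bigr do rewrite coord_line.
rewrite big_split /= sumr_const card_ord -mulr_sumr s0 mulr0 addr0.
by rewrite -(mulr_natl (n%:R^-1 : R) n) mulfV // pnatr_eq0 -lt0n.
Qed.

Lemma sum_dd (R : realType) n (p : 'rV[R]_n) : (0 < n)%N -> in_simplex p ->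
  \sum_i dd p ord0 i = 0.
Proof.
move=> n0 [_ s1]; rewrite /dd.
under eq_bigr do rewrite !mxE.
by rewrite sumrB s1 sumr_const card_ord -(mulr_natl (n%:R^-1 : R) n) mulfV ?subrr // pnatr_eq0 -lt0n.
Qed.

Definition chord (R : realType) n (p : 'rV[R]_n) x y :=
  0 < x /\ 0 < y /\ in_simplex (ubar R n + (-x) *: dd p) /\ in_simplex (ubar R n + y *: dd p) /\
   (exists k, (ubar R n + (-x) *: dd p) ord0 k = 0) /\ (exists j, (ubar R n + y *: dd p) ord0 j = 0).

Lemma inv_n_gt0 (R : realType) n : (0 < n)%N -> 0 < (n%:R^-1 : R).
Proof. by move=> n0; rewrite invr_gt0 ltr0n. Qed.

Lemma chord_bound (R : realType) n (p : 'rV[R]_n) x y l : (0 < n)%N -> chord p x y ->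
  in_simplex (ubar R n + l *: dd p) -> -x <= l <= y.
Proof.
move=> n0 [x0 [y0 [_ [_ [[k hk] [j hj]]]]]] [hl _].
have w0 := inv_n_gt0 R n0.
move: (hl k) (hl j) hk hj; rewrite !coord_line => hlk hlj hk hj.
set w := n%:R^-1 in w0 hlk hlj hk hj *.
set dk := dd p ord0 k in hlk hk *. set dj := dd p ord0 j in hlj hj *.
have dk0 : 0 < dk by nra.
have dj0 : dj < 0 by nra.
apply/andP; split; nra.
Qed.

Lemma enormZ (R : realType) n (d : 'rV[R]_n) c : enorm (c *: d) = `|c| * enorm d.
Proof.
rewrite /enorm /dot.
under eq_bigr do rewrite !mxE.
have -> : \sum_(i < n) c * d ord0 i * (c * d ord0 i) = c ^+ 2 * \sum_(i < n) d ord0 i * d ord0 i.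
  by rewrite mulr_sumr; apply: eq_bigr => i _; ring.
by rewrite sqrtrM ?sqr_ge0 // sqrtr_sqr.
Qed.

Lemma dot_ge0 (R : realType) n (d : 'rV[R]_n) : 0 <= dot d d.
Proof. by rewrite /dot; apply: sumr_ge0 => i _; rewrite -expr2 sqr_ge0. Qed.

Lemma enorm_gt0 (R : realType) n (d : 'rV[R]_n) : d != 0 -> 0 < enorm d.
Proof.
move=> dn0; rewrite /enorm sqrtr_gt0 lt_def dot_ge0 andbT.
apply: contra dn0 => /eqP h; apply/eqP/rowP => i; rewrite mxE.
have H : d ord0 i * d ord0 i = 0.
  apply: (psumr_eq0P (P := predT) (F := fun i => d ord0 i * d ord0 i)) => //.
  by move=> j _; rewrite -expr2 sqr_ge0.
by move/eqP: H; rewrite mulf_eq0 orbb => /eqP.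
Qed.

Lemma seg_line (R : realType) n (p a b : 'rV[R]_n) : p <> ubar R n ->
  in_seg a b (ubar R n) -> in_seg a b p ->
  exists al be, a = ubar R n + al *: dd p /\ b = ubar R n + be *: dd p.
Proof.
move=> pu [t [_ Hu]] [r [_ Hp]].
have rt : r - t != 0.
  apply/eqP => /eqP; rewrite subr_eq0 => /eqP rt; apply: pu; by rewrite Hp Hu rt.
exists (- t / (r - t)), ((1 - t) / (r - t)); split; apply/rowP => i;
  have := congr1 (fun M : 'M[R]_(1,n) => M ord0 i) Hu; have := congr1 (fun M : 'M[R]_(1,n) => M ord0 i) Hp;
  rewrite /dd !mxE => hp hu; rewrite hp hu; field; exact: rt.
Qed.

Lemma diff_line (R : realType) n (d : 'rV[R]_n) al be :
  (ubar R n + al *: d) - (ubar R n + be *: d) = (al - be) *: d.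
Proof. by apply/rowP => i; rewrite !mxE; ring. Qed.

Lemma line1 (R : realType) n (p : 'rV[R]_n) : ubar R n + 1 *: dd p = p.
Proof. by rewrite scale1r /dd addrC subrK. Qed.

Lemma chord_neq (R : realType) n (p : 'rV[R]_n) x y : (0 < n)%N -> chord p x y ->
  exists k, p ord0 k - n%:R^-1 != 0.
Proof.
move=> n0 [x0 [y0 [_ [_ [[k hk] _]]]]]; exists k.
have w0 := inv_n_gt0 R n0.
move: hk; rewrite /dd !mxE => hk; apply/eqP => h; rewrite h in hk; lra.
Qed.

Lemma chord_pu (R : realType) n (p : 'rV[R]_n) x y : (0 < n)%N -> chord p x y -> p <> ubar R n.
Proof.
move=> n0 /(chord_neq n0) [k hk] pu; move: hk; rewrite pu mxE subrr; by rewrite eqxx.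
Qed.

Lemma frac01 (R : realType) (a b : R) : 0 <= a -> a <= b -> 0 < b -> 0 <= a / b <= 1.
Proof. move=> a0 ab b0; apply/andP; split; first by apply: divr_ge0 => //; exact: ltW. by rewrite ler_pdivrMr // mul1r. Qed.

Lemma chord_maxseg (R : realType) n (p : 'rV[R]_n) x y : (0 < n)%N -> in_simplex p -> chord p x y ->
  max_seg p (ubar R n + (-x) *: dd p) (ubar R n + y *: dd p).
Proof.
move=> n0 hpS hc; have hc' := hc; move: hc' => [x0 [y0 [ha [hb _]]]].
have pu := chord_pu n0 hc.
have y1 : 1 <= y.
  by have := chord_bound (l := 1) n0 hc; rewrite line1 => /(_ hpS) /andP[_].
have xy : x + y != 0 by rewrite gt_eqF // addr_gt0.
have x1 : 1 + x != 0 by rewrite gt_eqF // addr_gt0.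
have nz : (n%:R : R) != 0 by rewrite pnatr_eq0 -lt0n.
split; first exact: ha. split; first exact: hb.
split.
  exists (x / (x + y)); split.
    apply: frac01; lra.
  apply/rowP => i; rewrite !mxE; field; by rewrite ?nz ?xy ?x1.
split.
  exists ((x + 1) / (x + y)); split.
    apply: frac01; lra.
  apply/rowP => i; rewrite /dd !mxE; field; by rewrite ?nz ?xy ?x1.
split.
  exists (x / (1 + x)); split.
    apply: frac01; lra.
  apply/rowP => i; rewrite /dd !mxE; field; by rewrite ?nz ?xy ?x1.
move=> a' b' ha' hb' hu hp.
have [al [be [ea eb]]] := seg_line pu hu hp; subst a' b'.
have := chord_bound n0 hc ha'; have := chord_bound n0 hc hb'.
move=> /andP[b1 b2] /andP[a1 a2].
rewrite !diff_line !enormZ ler_wpM2r // ?sqrtr_ge0 //.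
rewrite ler_norml (ltr0_norm); last by lra.
apply/andP; split; lra.
Qed.

Lemma chord_unique (R : realType) n (p a' b' : 'rV[R]_n) x y : (0 < n)%N -> in_simplex p ->
  chord p x y -> max_seg p a' b' ->
  a' = ubar R n + (-x) *: dd p /\ b' = ubar R n + y *: dd p.
Proof.
move=> n0 hpS hc [ha' [hb' [hu [hp [hau hmax]]]]].
have pu := chord_pu n0 hc.
have [al [be [ea eb]]] := seg_line pu hu hp; subst a' b'.
have [ha [hb [hu0 [hp0 _]]]] := chord_maxseg n0 hpS hc.
have := hmax _ _ ha hb hu0 hp0.
have [k hk] := chord_neq n0 hc.
have dn0 : dd p != 0.
  apply: contra hk => /eqP h; have := congr1 (fun M : 'M[R]_(1,n) => M ord0 k) h.
  by rewrite /dd !mxE => ->.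
rewrite !diff_line !enormZ ler_pM2r ?enorm_gt0 //.
have [x0 [y0 _]] := hc.
have := chord_bound n0 hc ha'; have := chord_bound n0 hc hb'.
move=> /andP[b1 b2] /andP[a1 a2].
rewrite (ltr0_norm); last by lra.
rewrite ler_normr => hab.
have [q [/andP[q0 q1] hq]] := hau.
have := congr1 (fun M : 'M[R]_(1,n) => M ord0 k) hq; rewrite /dd !mxE => hqk.
set w := n%:R^-1 in hqk hk.
have e : ((1 - q) * al + q) * (p ord0 k - w) = 0 by nra.
move: e => /eqP; rewrite mulf_eq0 (negbTE hk) orbF => /eqP e.
case/orP: hab => hab.
  have hal : al = y by lra.
  have hbe : be = -x by lra.
  rewrite hal in e; exfalso; clear -e y0 q0 q1; nra.
have hal : al = -x by lra.
have hbe : be = y by lra.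
by rewrite hal hbe.
Qed.

Lemma exists_max (R : realType) n (f : 'I_n -> R) : (0 < n)%N -> exists k, forall i, f i <= f k.
Proof.
case: n f => [//|n] f _.
have := @arg_maxP _ _ _ ord0 predT f isT; case=> k _ hk; exists k => i; exact: hk i isT.
Qed.

Lemma exists_min (R : realType) n (f : 'I_n -> R) : (0 < n)%N -> exists k, forall i, f k <= f i.
Proof.
case: n f => [//|n] f _.
have := @arg_minP _ _ _ ord0 predT f isT; case=> k _ hk; exists k => i; exact: hk i isT.
Qed.

Lemma dd_eq0 (R : realType) n (p : 'rV[R]_n) : (forall i, dd p ord0 i = 0) -> p = ubar R n.
Proof.
move=> h; apply/rowP => i; have := h i; rewrite /dd !mxE => /eqP; rewrite subr_eq0 => /eqP ->.
done.
Qed.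

Lemma chord_exists (R : realType) n (p : 'rV[R]_n) : (0 < n)%N -> in_simplex p -> p <> ubar R n ->
  exists x y, chord p x y.
Proof.
move=> n0 hpS pu.
have s0 := sum_dd n0 hpS.
have w0 := inv_n_gt0 R n0.
set d := dd p in s0 *.
have [k hk] := exists_max (fun i => d ord0 i) n0.
have [j hj] := exists_min (fun i => d ord0 i) n0.
have dk0 : 0 < d ord0 k.
  rewrite ltNge; apply/negP => hle; apply: pu; apply: dd_eq0 => i.
  have : - d ord0 i = 0.
    apply: (psumr_eq0P (P := predT) (F := fun i => - d ord0 i)) => //.
      by move=> l _; rewrite oppr_ge0 (le_trans (hk l)).
    by rewrite sumrN s0 oppr0.
  by move/eqP; rewrite oppr_eq0 => /eqP.
have dj0 : d ord0 j < 0.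
  rewrite ltNge; apply/negP => hle; apply: pu; apply: dd_eq0 => i.
  apply: (psumr_eq0P (P := predT) (F := fun i => d ord0 i)) => //.
  by move=> l _; rewrite (le_trans hle (hj l)).
set w := n%:R^-1 in w0.
exists (w / d ord0 k), (w / (- d ord0 j)).
have nk : d ord0 k != 0 by rewrite gt_eqF.
have nj : d ord0 j != 0 by rewrite lt_eqF.
split; first by rewrite divr_gt0.
split; first by rewrite divr_gt0 // oppr_gt0.
split.
  split; last exact: sum_line.
  move=> i; rewrite coord_line -/w.
  have -> : w + - (w / d ord0 k) * d ord0 i = w * (d ord0 k - d ord0 i) / d ord0 k by field.
  apply: divr_ge0; [apply: mulr_ge0; [exact: ltW | by rewrite subr_ge0] | exact: ltW].
split.
  split; last exact: sum_line.
  move=> i; rewrite coord_line -/w.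
  have -> : w + (w / - d ord0 j) * d ord0 i = w * (d ord0 i - d ord0 j) / (- d ord0 j) by field.
  apply: divr_ge0; [apply: mulr_ge0; [exact: ltW | by rewrite subr_ge0] | by rewrite oppr_ge0 ltW].
split.
  by exists k; rewrite coord_line -/w; field.
by exists j; rewrite coord_line -/w; field.
Qed.

Lemma sum_two (R : realType) n (f : 'I_n -> R) k j : k != j -> (forall i, 0 <= f i) ->
  f k + f j <= \sum_i f i.
Proof.
move=> kj f0.
rewrite (bigD1 k) //= (bigD1 j) /=; last by rewrite eq_sym.
rewrite addrA lerDl; apply: sumr_ge0 => i _; exact: f0.
Qed.

Lemma chord_cos (R : realType) n (p : 'rV[R]_n) x y : (2 <= n)%N -> in_simplex p -> chord p x y ->
  cosang (ubar R n + (-x) *: dd p) (ubar R n + y *: dd p) <= (n%:R - 2) / (n%:R + 2).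
Proof.
move=> n2 hpS hc.
have n0 : (0 < n)%N by apply: leq_trans n2.
have s0 := sum_dd n0 hpS.
have w0 := inv_n_gt0 R n0.
have [x0 [y0 [_ [_ [[k hk] [j hj]]]]]] := hc.
rewrite /cosang /enorm !dot_line //.
move: hk hj; rewrite !coord_line => hk hj.
have D0 := dot_ge0 (dd p).
have Ds : (dd p ord0 k)^+2 + (dd p ord0 j)^+2 <= dot (dd p) (dd p).
  have kj : k != j.
    apply/eqP => ekj; rewrite ekj in hk; nra.
  rewrite /dot; apply: (sum_two (f := fun i => dd p ord0 i * dd p ord0 i)) => //.
  by move=> i; rewrite -expr2 sqr_ge0.
set D := dot (dd p) (dd p) in D0 Ds *.
set dk := dd p ord0 k in hk Ds. set dj := dd p ord0 j in hj Ds.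
set w := n%:R^-1 in w0 hk hj *.
set N := (n%:R : R).
have N2 : 2 <= N by rewrite /N (ler_nat R 2 n).
have Nw : N * w = 1 by rewrite /w /N mulfV // pnatr_eq0 -lt0n.
have hX : 2 * w^+2 <= x * y * D.
  have h1 : 0 <= x * y * (dk + dj)^+2.
    apply: mulr_ge0; [apply: mulr_ge0; exact: ltW | exact: sqr_ge0].
  have h2 : x * y * (dk^+2 + dj^+2) <= x * y * D.
    apply: ler_wpM2l; [apply: mulr_ge0; exact: ltW | exact: Ds].
  have e1 : x * dk = w by lra.
  have e2 : y * dj = - w by lra.
  nra.
set X := x * y * D in hX.
have A0 : 0 <= w + - x * - x * D by nra.
rewrite -sqrtrM //.
set S := Num.sqrt _.
have XwS : w + X <= S.
  have wX0 : 0 <= w + X by nra.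
  rewrite -(ger0_norm wX0) -sqrtr_sqr /S ler_sqrt; last first.
    apply: mulr_ge0 => //; nra.
  have h3 : 0 <= w * D * (x - y)^+2.
    apply: mulr_ge0; [apply: mulr_ge0 => //; exact: ltW | exact: sqr_ge0].
  rewrite /X; nra.
have S0 : 0 < S by apply: lt_le_trans XwS; nra.
rewrite mulNr mulNr ler_pdivrMr //.
have key : (w + - X) * (N + 2) <= (N - 2) * (w + X) by nra.
have N20 : 0 < N + 2 by lra.
apply: (le_trans (y := (N - 2) / (N + 2) * (w + X))).
  have e : (N - 2) / (N + 2) * (w + X) = (N-2)*(w+X) / (N+2) by rewrite mulrAC.
  rewrite e ler_pdivlMr //; rewrite /X in key *; nra.
apply: ler_wpM2l; [apply: divr_ge0; lra | exact: XwS].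
Qed.

Definition ee (R : realType) n (i : 'I_n) : R :=
  (if (i : nat) == 0%N then -1 else if (i : nat) == n.-1 then 1 else 0) / n%:R.

Lemma sum_e (R : realType) m (f : 'I_m.+3 -> R) :
  (forall i, i != ord0 -> i != ord_max -> f i = 0) -> \sum_i f i = f ord0 + f ord_max.
Proof.
move=> h; rewrite (bigD1 ord0) //= (bigD1 ord_max) //= big1 ?addr0 //.
by move=> i /andP[h1 h2]; apply: h.
Qed.

Lemma nz3 (R : realType) m : ((m.+3)%:R : R) != 0.
Proof. by rewrite pnatr_eq0. Qed.

Lemma dd_bstar (R : realType) m i : dd (b_star R m.+3) ord0 i = ee R i.
Proof.
have nz := nz3 R m.
rewrite /dd /ee !mxE; case: ifP => _; [|case: ifP => _]; by field.
Qed.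

Lemma ee_zero (R : realType) m (i : 'I_m.+3) : i != ord0 -> i != ord_max -> ee R i = 0.
Proof.
move=> h1 h2; rewrite /ee.
have -> : ((i : nat) == 0%N) = false by apply/negbTE; apply: contra h1 => /eqP h; apply/eqP/val_inj.
have -> : ((i : nat) == (m.+3).-1) = false by apply/negbTE; apply: contra h2 => /eqP h; apply/eqP/val_inj.
by rewrite mul0r.
Qed.

Lemma ee0 (R : realType) m : ee R (ord0 : 'I_m.+3) = - (m.+3)%:R^-1.
Proof. by rewrite /ee /= mulN1r. Qed.

Lemma eemax (R : realType) m : ee R (ord_max : 'I_m.+3) = (m.+3)%:R^-1.
Proof. by rewrite /ee /= eqxx mul1r. Qed.

Lemma sum_dd_bstar (R : realType) m : \sum_i dd (b_star R m.+3) ord0 i = 0.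
Proof.
under eq_bigr do rewrite dd_bstar.
by rewrite (sum_e (f := fun i => ee R i)) ?ee0 ?eemax ?addNr // => i; apply: ee_zero.
Qed.

Lemma dot_dd_bstar (R : realType) m : dot (dd (b_star R m.+3)) (dd (b_star R m.+3)) = 2 * (m.+3)%:R^-1 ^+ 2.
Proof.
rewrite /dot; under eq_bigr do rewrite dd_bstar.
rewrite (sum_e (f := fun i => ee R i * ee R i)) ?ee0 ?eemax; first by ring.
by move=> i h1 h2; rewrite ee_zero // mul0r.
Qed.

Lemma astar_eq (R : realType) m : a_star R m.+3 = ubar R m.+3 + (-1) *: dd (b_star R m.+3).
Proof.
have nz := nz3 R m.
apply/rowP => i; rewrite coord_line dd_bstar /ee !mxE.
case: ifP => _; [|case: ifP => _]; by field.
Qed.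

Lemma chord_bstar (R : realType) m : chord (b_star R m.+3) 1 1.
Proof.
have w0 := inv_n_gt0 R (isT : (0 < m.+3)%N).
have s0 := sum_dd_bstar R m.
split; first lra. split; first lra.
split.
  split; last exact: sum_line.
  move=> i; rewrite coord_line dd_bstar /ee.
  case: ifP => _; [|case: ifP => _]; rewrite ?(mulN1r, mul1r, mul0r, opprK, oppr0); move: w0; set w := (_ %:R)^-1 => w0; lra.
split.
  split; last exact: sum_line.
  move=> i; rewrite coord_line dd_bstar /ee.
  case: ifP => _; [|case: ifP => _]; rewrite ?(mulN1r, mul1r, mul0r, opprK, oppr0); move: w0; set w := (_ %:R)^-1 => w0; lra.
split.
  exists ord_max; rewrite coord_line dd_bstar eemax; move: w0; set w := (_ %:R)^-1 => w0; lra.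
exists ord0; rewrite coord_line dd_bstar ee0; move: w0; set w := (_ %:R)^-1 => w0; lra.
Qed.

Lemma cos_bstar (R : realType) m :
  cosang (ubar R m.+3 + (-1) *: dd (b_star R m.+3)) (ubar R m.+3 + 1 *: dd (b_star R m.+3))
  = ((m.+3)%:R - 2) / ((m.+3)%:R + 2).
Proof.
have nz := nz3 R m.
have w0 := inv_n_gt0 R (isT : (0 < m.+3)%N).
rewrite /cosang /enorm !dot_line ?sum_dd_bstar // dot_dd_bstar.
have -> : (-1) * (-1) = (1 : R) by rewrite mulN1r opprK.
rewrite !mul1r -expr2 sqr_sqrtr; last by move: w0; set w := (_ %:R)^-1 => w0; nra.
have N0 : ((m.+3)%:R : R) + 2 != 0 by rewrite gt_eqF // addr_gt0 // ltr0n.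
field.
have hm : 0 <= (m%:R : R) by rewrite ler0n.
by apply/andP; split; rewrite gt_eqF //; lra.
Qed.

Lemma acos_anti (R : realType) (x y : R) : -1 <= x -> x <= y -> y <= 1 -> acos y <= acos x.
Proof.
move=> h1 h2 h3.
have hx : -1 <= x <= 1 by apply/andP; split; lra.
have hy : -1 <= y <= 1 by apply/andP; split; lra.
have [/andP[ax0 axpi] cx] := acos_def hx.
have [/andP[ay0 aypi] cy] := acos_def hy.
rewrite leNgt; apply/negP => H.
have := @ltr_cos R (acos x) (acos y).
rewrite !in_itv /= ax0 axpi ay0 aypi => /(_ isT isT).
rewrite H cx cy => h; lra.
Qed.

Lemma cosang_ge0 (R : realType) n (a b : 'rV[R]_n) : in_simplex a -> in_simplex b -> 0 <= cosang a b.
Proof.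
move=> [ha _] [hb _]; rewrite /cosang; apply: divr_ge0.
  by apply: sumr_ge0 => i _; apply: mulr_ge0.
by apply: mulr_ge0; apply: sqrtr_ge0.
Qed.

Theorem theorem1p1 (R : realType) (n : nat) (hn : (3 <= n)%N) :
  (* existence and uniqueness of the maximal segment endpoints a(p), b(p) *)
  (forall p : 'rV[R]_n, in_simplex p -> p <> ubar R n ->
     exists a b, max_seg p a b /\
       (forall a' b', max_seg p a' b' -> a' = a /\ b' = b)) /\
  (* (n-2)/(n+2) is an upper bound of the cosine over all p *)
  (forall p a b : 'rV[R]_n, in_simplex p -> p <> ubar R n -> max_seg p a b ->
     cosang a b <= (n%:R - 2) / (n%:R + 2)) /\
  (* ... attained by the pair a_star, b_star *)
  (exists p : ('rV[R]_n), in_simplex p /\ p <> ubar R n /\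
     max_seg p (a_star R n) (b_star R n)) /\
  cosang (a_star R n) (b_star R n) = (n%:R - 2) / (n%:R + 2) /\
  (* minimal angle spread equals arccos((n-2)/(n+2)) *)
  (forall p a b : 'rV[R]_n, in_simplex p -> p <> ubar R n -> max_seg p a b ->
     acos ((n%:R - 2) / (n%:R + 2)) <= angle a b) /\
  (exists p a b : ('rV[R]_n), in_simplex p /\ p <> ubar R n /\ max_seg p a b /\
     angle a b = acos ((n%:R - 2) / (n%:R + 2))).
Proof.
case: n hn => [|[|[|m]]] // _.
have n0 : (0 < m.+3)%N by [].
have n2 : (2 <= m.+3)%N by [].
have P1 : forall p : 'rV[R]_m.+3, in_simplex p -> p <> ubar R m.+3 ->
     exists a b, max_seg p a b /\ (forall a' b', max_seg p a' b' -> a' = a /\ b' = b).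
  move=> p hpS pu; have [x [y hc]] := chord_exists n0 hpS pu.
  exists (ubar R m.+3 + (-x) *: dd p), (ubar R m.+3 + y *: dd p); split.
    exact: chord_maxseg.
  move=> a' b' h; exact: chord_unique n0 hpS hc h.
have P2 : forall p a b : 'rV[R]_m.+3, in_simplex p -> p <> ubar R m.+3 -> max_seg p a b ->
     cosang a b <= ((m.+3)%:R - 2) / ((m.+3)%:R + 2).
  move=> p a b hpS pu hm; have [x [y hc]] := chord_exists n0 hpS pu.
  have [-> ->] := chord_unique n0 hpS hc hm; exact: chord_cos.
have hc := chord_bstar R m.
have hbS : in_simplex (b_star R m.+3).
  by have [_ [_ [_ [hb _]]]] := hc; rewrite line1 in hb.
have pu := chord_pu n0 hc.
have P3 : max_seg (b_star R m.+3) (a_star R m.+3) (b_star R m.+3).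
  by have := chord_maxseg n0 hbS hc; rewrite -astar_eq line1.
have P4 : cosang (a_star R m.+3) (b_star R m.+3) = ((m.+3)%:R - 2) / ((m.+3)%:R + 2).
  by have := cos_bstar R m; rewrite -astar_eq line1.
have c1 : ((m.+3)%:R - 2) / ((m.+3)%:R + 2) <= (1 : R).
  have hm : 0 <= (m%:R : R) by rewrite ler0n.
  rewrite ler_pdivrMr ?mul1r; last by rewrite -addn3 natrD; lra.
  lra.
split; first exact: P1.
split; first exact: P2.
split; first by exists (b_star R m.+3).
split; first exact: P4.
split.
  move=> p a b hpS pu' hm; rewrite /angle.
  have [ha [hb _]] := hm.
  have := cosang_ge0 ha hb; have := P2 _ _ _ hpS pu' hm => h1 h2.
  apply: acos_anti => //; lra.
exists (b_star R m.+3), (a_star R m.+3), (b_star R m.+3).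
by split; [|split; [|split]] => //; rewrite /angle P4.
Qed.
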